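(* Under the hypotheses of Lemma 3 (namely: $\mathscr{A}=\{A_1,\ldots,A_r\}$ an irreducible set of real $d\times d$ matrices, $\|\cdot\|$ a norm on $\mathbb{R}^d$, integers $p\ge d-1$, $n\ge1$, a number $\mu>1$, matrices $A_{i_1},\ldots,A_{i_n}\in\mathscr{A}$ and nonzero $x_*\in\mathbb{R}^d$ with $\|A_{i_n}\cdots A_{i_1}x_*\|\ge \mu\,\eta_p(\mathscr{A})\,\rho(\mathscr{A})^n\|x_*\|$, where $\eta_p(\mathscr{A})=\max\{1,\rho(\mathscr{A})^p\}/\chi_p(\mathscr{A})$), and with $\eta=\mu^{1/(n+p)}$, there exists a sequence $H_k\in\mathscr{A}_\infty$, $k=0,1,\ldots$, such that $\mathrm{len}(H_k)\to\infty$ as $k\to\infty$ and \[ \|H_k\|\ge\big(\eta\,\rho(\mathscr{A})\big)^{\mathrm{len}(H_k)},\qquad k=0,1,\ldots. \]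
   Context: Irreducible: the matrices in $\mathscr{A}$ have no common invariant subspace other than $\{0\}$ and $\mathbb{R}^d$. $\mathscr{A}^k$ is the set of products of $k$ matrices from $\mathscr{A}$, $\mathscr{A}^0=\{I\}$; matrices carry the induced operator norm, $\|\mathscr{A}^n\|=\max_{A\in\mathscr{A}^n}\|A\|$, and $\rho(\mathscr{A})=\limsup_{n\to\infty}\|\mathscr{A}^n\|^{1/n}$. $\mathscr{A}_\infty=\bigcup_{k\ge1}\mathscr{A}^k$, elements regarded as products of factors from $\mathscr{A}$ whose number of factors is the length $\mathrm{len}$. $\mathscr{A}_p=\bigcup_{k=0}^p\mathscr{A}^k$, $\mathscr{A}_p(x)=\{Ax:A\in\mathscr{A}_p\}$, $\mathbf{S}(t)$ the closed $\|\cdot\|$-ball of radius $t$ about $0$, and $\chi_p(\mathscr{A})=\inf_{\|x\|=1}\sup\{t\ge0:\mathbf{S}(t)\subseteq\mathrm{conv}(\mathscr{A}_p(x)\cup\mathscr{A}_p(-x))\}$ is the $p$-measure of irreducibility. *)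

(* Defs.v *)
From Stdlib Require Import Reals Lra ClassicalEpsilon List.
From mathcomp Require Import ssreflect ssrfun ssrbool eqtype ssrnat seq fintype bigop.
Set Implicit Arguments. Unset Strict Implicit.

Open Scope R_scope.

Definition Vec (d : nat) := 'I_d -> R.
Definition Mat (d : nat) := 'I_d -> 'I_d -> R.

Definition vzero d : Vec d := fun _ => 0.
Arguments vzero d _ : clear implicits.
Definition vadd d (x y : Vec d) : Vec d := fun i => x i + y i.
Definition vscale d (c : R) (x : Vec d) : Vec d := fun i => c * x i.
Definition vopp d (x : Vec d) : Vec d := fun i => - x i.

Definition mv d (A : Mat d) (x : Vec d) : Vec d :=
  fun i => \big[Rplus/0]_(j < d) (A i j * x j).

Definition is_norm d (N : Vec d -> R) : Prop :=
  (forall x, 0 <= N x) /\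
  (forall x, N x = 0 -> x = vzero d) /\
  (forall c x, N (vscale c x) = Rabs c * N x) /\
  (forall x y, N (vadd x y) <= N x + N y).

(* supremum / infimum of a set of reals (meaningful when the lub exists) *)
Definition Rsup (E : R -> Prop) : R := epsilon (inhabits 0) (fun m => is_lub E m).
Definition Rinf (E : R -> Prop) : R := - Rsup (fun y => E (- y)).

Definition opnorm d (N : Vec d -> R) (f : Vec d -> Vec d) : R :=
  Rsup (fun y => exists x, N x = 1 /\ y = N (f x)).

(* a family A = {A_0,...,A_{r-1}}; a word w = [i_1; ...; i_n] denotes the
   product A_{i_n} ... A_{i_1} (i_1 acts first); its length is len = length w *)
Fixpoint act d r (A : 'I_r -> Mat d) (w : list 'I_r) (x : Vec d) : Vec d :=
  match w with
  | nil => x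
  | i :: w' => act A w' (mv (A i) x)
  end.

Definition normpow d r (N : Vec d -> R) (A : 'I_r -> Mat d) (n : nat) : R :=
  Rsup (fun y => exists w : list 'I_r, length w = n /\ y = opnorm N (act A w)).

Definition nroot (n : nat) (x : R) : R :=
  if Rle_dec x 0 then 0 else Rpower x (/ INR n).

Definition jsr d r (N : Vec d -> R) (A : 'I_r -> Mat d) : R :=
  Rinf (fun z => exists m : nat,
    z = Rsup (fun y => exists n : nat, (m <= n)%nat /\ (1 <= n)%nat /\
                                       y = nroot n (normpow N A n))).

Definition subspace d (V : Vec d -> Prop) : Prop :=
  V (vzero d) /\ (forall x y, V x -> V y -> V (vadd x y)) /\
  (forall c x, V x -> V (vscale c x)).

Definition irreducible d r (A : 'I_r -> Mat d) : Prop :=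
  forall V : Vec d -> Prop, subspace V ->
    (forall i x, V x -> V (mv (A i) x)) ->
    (forall x, V x <-> x = vzero d) \/ (forall x, V x).

Definition Ap_img d r (A : 'I_r -> Mat d) (p : nat) (x : Vec d) : Vec d -> Prop :=
  fun y => exists w : list 'I_r, (length w <= p)%nat /\ y = act A w x.

Fixpoint wsum d (l : list (R * Vec d)) : Vec d :=
  match l with
  | nil => vzero d
  | (c, v) :: l' => vadd (vscale c v) (wsum l')
  end.

Definition conv d (S : Vec d -> Prop) : Vec d -> Prop :=
  fun y => exists l : list (R * Vec d),
    (forall cv, In cv l -> 0 <= fst cv /\ S (snd cv)) /\
    fold_right Rplus 0 (map fst l) = 1 /\ y = wsum l.

Definition ball d (N : Vec d -> R) (t : R) : Vec d -> Prop := fun y => N y <= t.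

Definition chi d r (N : Vec d -> R) (A : 'I_r -> Mat d) (p : nat) : R :=
  Rinf (fun z => exists x, N x = 1 /\
    z = Rsup (fun t => 0 <= t /\
           (forall y, ball N t y ->
              conv (fun v => Ap_img A p x v \/ Ap_img A p (vopp x) v) y))).

Definition eta_p d r (N : Vec d -> R) (A : 'I_r -> Mat d) (p : nat) : R :=
  Rmax 1 (jsr N A ^ p) / chi N A p.

(* Main.v *)
From HB Require Import structures.
Require Import Defs.
From Stdlib Require Import Reals Lra ClassicalEpsilon FunctionalExtensionality List Classical.
From mathcomp Require Import all_boot all_algebra.
Set Implicit Arguments. Unset Strict Implicit.

Local Open Scope R_scope.

Definition Req_bool (x y : R) : bool := if Req_EM_T x y then true else false.
Lemma Req_boolP : Equality.axiom Req_bool.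
Proof. move=> x y; rewrite /Req_bool; case: Req_EM_T => h; [by constructor|by constructor]. Qed.
HB.instance Definition _ := hasDecEq.Build R Req_boolP.

Definition Rfind (P : pred R) (n : nat) : option R :=
  match excluded_middle_informative (exists x, P x) with
  | left h => Some (proj1_sig (constructive_indefinite_description _ h))
  | right _ => None end.
Lemma Rfind_correct P n x : Rfind P n = Some x -> P x.
Proof. rewrite /Rfind; case: excluded_middle_informative => // h [<-].
  exact: (proj2_sig (constructive_indefinite_description _ h)). Qed.
Lemma Rfind_complete (P : pred R) : (exists x, P x) -> exists n, Rfind P n.
Proof. move=> h; exists 0%N; rewrite /Rfind; case: excluded_middle_informative => //. Qed.
Lemma Rfind_ext (P Q : pred R) : P =1 Q -> Rfind P =1 Rfind Q.
Proof. move=> h; have -> // : P = Q by apply: functional_extensionality. Qed.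
HB.instance Definition _ := hasChoice.Build R Rfind_correct Rfind_complete Rfind_ext.

Lemma RaddA : associative Rplus. Proof. move=> x y z; lra. Qed.
Lemma RaddC : commutative Rplus. Proof. move=> x y; lra. Qed.
Lemma RmulA : associative Rmult. Proof. move=> x y z; ring. Qed.
Lemma RmulC : commutative Rmult. Proof. move=> x y; ring. Qed.
Lemma Radd0 : left_id 0 Rplus. Proof. move=> x; lra. Qed.
Lemma RaddN : left_inverse 0 Ropp Rplus. Proof. move=> x; lra. Qed.
HB.instance Definition _ := GRing.isZmodule.Build R RaddA RaddC Radd0 RaddN.
Lemma Rmul1 : left_id 1 Rmult. Proof. move=> x; ring. Qed.
Lemma RmulDl : left_distributive Rmult Rplus. Proof. move=> x y z; ring. Qed.
Lemma Rone_neq0 : (1 != 0 :> R). Proof. apply/eqP; exact: R1_neq_R0. Qed.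
HB.instance Definition _ := GRing.Zmodule_isComNzRing.Build R RmulA RmulC Rmul1 RmulDl Rone_neq0.
Lemma RmulVf (x : R) : x != 0 -> Rinv x * x = 1.
Proof. move/eqP=> h; exact: Rinv_l. Qed.
HB.instance Definition _ := GRing.ComNzRing_isField.Build R RmulVf Rinv_0.

Lemma Radd0r : right_id 0 Rplus. Proof. move=> x; lra. Qed.
HB.instance Definition _ := Monoid.isComLaw.Build R 0 Rplus RaddA RaddC Radd0.

Lemma sum_le (I : Type) (s : seq I) (P : pred I) (f g : I -> R) :
  (forall i, P i -> f i <= g i) ->
  \big[Rplus/0]_(i <- s | P i) f i <= \big[Rplus/0]_(i <- s | P i) g i.
Proof. move=> h; apply: (big_ind2 (fun a b => a <= b)) => //; [lra| move=> *; lra]. Qed.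

Lemma sum_ge0 (I : Type) (s : seq I) (P : pred I) (f : I -> R) :
  (forall i, P i -> 0 <= f i) -> 0 <= \big[Rplus/0]_(i <- s | P i) f i.
Proof. move=> h; apply: (big_ind (fun a => 0 <= a)) => //; [lra| move=> *; lra]. Qed.

Lemma sum_abs (I : Type) (s : seq I) (P : pred I) (f : I -> R) :
  Rabs (\big[Rplus/0]_(i <- s | P i) f i) <= \big[Rplus/0]_(i <- s | P i) Rabs (f i).
Proof.
apply: (big_ind2 (fun a b => Rabs a <= b)); first by rewrite Rabs_R0; lra.
  by move=> a b c e h1 h2; apply: Rle_trans (Rabs_triang _ _) _; lra.
by move=> i _; lra.
Qed.

Lemma sum_mull (I : Type) (s : seq I) (P : pred I) (f : I -> R) c :
  \big[Rplus/0]_(i <- s | P i) (c * f i) = c * \big[Rplus/0]_(i <- s | P i) f i.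
Proof. by apply: (big_ind2 (fun a b => a = c * b)) => [|a b e f' -> ->|]; [ring|ring|]. Qed.

Lemma sum_add (I : Type) (s : seq I) (P : pred I) (f g : I -> R) :
  \big[Rplus/0]_(i <- s | P i) (f i + g i) = \big[Rplus/0]_(i <- s | P i) f i + \big[Rplus/0]_(i <- s | P i) g i.
Proof. exact: big_split. Qed.

Lemma sum_le_term (I : eqType) (s : seq I) (f : I -> R) i :
  uniq s -> i \in s -> (forall j, 0 <= f j) -> f i <= \big[Rplus/0]_(j <- s) f j.
Proof. move=> u h p; rewrite (bigD1_seq i) //=; have := @sum_ge0 _ s (fun j => j != i) f (fun j _ => p j); lra. Qed.

Lemma Rsup_lub (E : R -> Prop) : (exists x, E x) -> (exists M, forall x, E x -> x <= M) ->
  is_lub E (Rsup E).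
Proof.
move=> [x hx] [M hM]; rewrite /Rsup; apply: epsilon_spec.
have [m hm] := completeness E (ex_intro _ M hM) (ex_intro _ x hx); by exists m.
Qed.

Lemma Rsup_ge (E : R -> Prop) x : (exists M, forall x, E x -> x <= M) -> E x -> x <= Rsup E.
Proof. move=> hb hx; have [h _] := Rsup_lub (ex_intro _ x hx) hb; exact: h. Qed.

Lemma Rsup_le (E : R -> Prop) M : (exists x, E x) -> (forall x, E x -> x <= M) -> Rsup E <= M.
Proof. move=> hn hb; have [_ h] := Rsup_lub hn (ex_intro _ M hb); exact: h. Qed.

Lemma Rinf_le (E : R -> Prop) x : (exists m, forall x, E x -> m <= x) -> E x -> Rinf E <= x.
Proof.
move=> [m hm] hx; rewrite /Rinf; suff : - x <= Rsup (fun y => E (- y)) by lra.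
apply: Rsup_ge; last by rewrite Ropp_involutive.
exists (- m) => y hy; have := hm _ hy; lra.
Qed.

Lemma Rinf_ge (E : R -> Prop) m : (exists x, E x) -> (forall x, E x -> m <= x) -> m <= Rinf E.
Proof.
move=> [x hx] hm; rewrite /Rinf; suff : Rsup (fun y => E (- y)) <= - m by lra.
apply: Rsup_le; first by exists (- x); rewrite Ropp_involutive.
move=> y hy; have := hm _ hy; lra.
Qed.

Section Part2.
Local Open Scope R_scope.

Lemma vext d (x y : Vec d) : (forall i, x i = y i) -> x = y.
Proof. move=> h; exact: functional_extensionality. Qed.

Section Lin.
Variables (d r : nat) (A : 'I_r -> Mat d).

Lemma mv_add (M : Mat d) x y : mv M (vadd x y) = vadd (mv M x) (mv M y).
Proof. apply: vext => i; rewrite /mv /vadd -sum_add; apply: eq_bigr => j _; ring. Qed.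
Lemma mv_scale (M : Mat d) c x : mv M (vscale c x) = vscale c (mv M x).
Proof. apply: vext => i; rewrite /mv /vscale -sum_mull; apply: eq_bigr => j _; ring. Qed.
Lemma mv_opp (M : Mat d) x : mv M (vopp x) = vopp (mv M x).
Proof.
have e : forall z : Vec d, vopp z = vscale (-1) z by move=> z; apply: vext => i; rewrite /vopp /vscale; ring.
by rewrite !e mv_scale. Qed.
Lemma mv_zero (M : Mat d) : mv M (vzero d) = vzero d.
Proof. apply: vext => i; rewrite /mv /vzero; rewrite big1 // => j _; ring. Qed.

Lemma act_add w x y : act A w (vadd x y) = vadd (act A w x) (act A w y).
Proof. elim: w x y => //= i w IH x y; by rewrite mv_add IH. Qed.
Lemma act_scale w c x : act A w (vscale c x) = vscale c (act A w x).
Proof. elim: w x => //= i w IH x; by rewrite mv_scale IH. Qed.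
Lemma act_opp w x : act A w (vopp x) = vopp (act A w x).
Proof. elim: w x => //= i w IH x; by rewrite mv_opp IH. Qed.
Lemma act_zero w : act A w (vzero d) = vzero d.
Proof. elim: w => //= i w IH; by rewrite mv_zero IH. Qed.
Lemma act_cat w1 w2 x : act A (w1 ++ w2) x = act A w2 (act A w1 x).
Proof. elim: w1 x => //= i w IH x; by rewrite IH. Qed.
End Lin.

Section Norm.
Variables (d : nat) (N : Vec d -> R).
Hypothesis hN : is_norm N.

Lemma N_ge0 x : 0 <= N x. Proof. by case: hN. Qed.
Lemma N_eq0 x : N x = 0 -> x = vzero d. Proof. case: hN => _ [h _]; exact: h. Qed.
Lemma N_scale c x : N (vscale c x) = Rabs c * N x. Proof. case: hN => _ [_ [h _]]; exact: h. Qed.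
Lemma N_tri x y : N (vadd x y) <= N x + N y. Proof. case: hN => _ [_ [_ h]]; exact: h. Qed.
Lemma N_zero : N (vzero d) = 0.
Proof. have -> : vzero d = vscale 0 (vzero d) by apply: vext => i; rewrite /vscale /vzero; ring.
  rewrite N_scale Rabs_R0; ring. Qed.
Lemma N_opp x : N (vopp x) = N x.
Proof. have -> : vopp x = vscale (-1) x by apply: vext => i; rewrite /vscale /vopp; ring.
  rewrite N_scale Rabs_Ropp Rabs_R1; ring. Qed.
Lemma N_neq0 x : x <> vzero d -> 0 < N x.
Proof. move=> h; have := N_ge0 x; case/Rle_lt_or_eq_dec => // e; by case: h; apply: N_eq0. Qed.
End Norm.

Lemma inv_small eps : 0 < eps -> exists K, forall k, (K <= k)%nat -> / INR k.+1 < eps.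
Proof.
move=> he; have [K [hK hK0]] := archimed_cor1 _ he; exists K => k hk.
apply: Rle_lt_trans hK; apply: Rinv_le_contravar; first by apply: lt_0_INR.
apply: le_INR; apply/leP; by apply: leq_trans hk _.
Qed.

Lemma inv_pos k : 0 < / INR k.+1.
Proof. apply: Rinv_0_lt_compat; apply: lt_0_INR; apply/ltP; done. Qed.

Lemma BW1 (u : nat -> R) B : (forall k, Rabs (u k) <= B) ->
  exists phi : nat -> nat, (forall k, (phi k < phi k.+1)%nat) /\ exists l, Un_cv (fun k => u (phi k)) l.
Proof.
move=> hb.
have [l hl] : exists l, ValAdh u l.
  apply: (@Bolzano_Weierstrass u (fun c => -B <= c <= B)); first exact: compact_P3.
  by move=> k; have := hb k; have := Rle_abs (u k); have := Rle_abs (- u k); rewrite Rabs_Ropp; lra.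
have step : forall (m k : nat), exists p, (m <= p)%nat /\ Rabs (u p - l) < / INR k.+1.
  move=> m k.
  have [p [hp1 hp2]] := hl (disc l (mkposreal _ (inv_pos k))) m
     (ex_intro _ (mkposreal _ (inv_pos k)) (fun y h => h)).
  by exists p; split => //; apply/leP.
pose pick m k := proj1_sig (constructive_indefinite_description _ (step m k)).
have hpick : forall m k, (m <= pick m k)%nat /\ Rabs (u (pick m k) - l) < / INR k.+1.
  by move=> m k; exact: (proj2_sig (constructive_indefinite_description _ (step m k))).
pose fix phi k := match k with 0 => pick 0%nat 0%nat | k'.+1 => pick (phi k').+1 k'.+1 end.
have hphi : forall k, Rabs (u (phi k) - l) < / INR k.+1.
  by case=> [|k] /=; [case: (hpick 0%nat 0%nat) | case: (hpick (phi k).+1 k.+1)].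
exists phi; split; first by move=> k /=; case: (hpick (phi k).+1 k.+1).
exists l => eps he; have [K hK] := inv_small he; exists K => k hk.
rewrite /R_dist; apply: Rlt_trans (hphi k) (hK _ _); by apply/leP.
Qed.

Definition incr (phi : nat -> nat) := forall k, (phi k < phi k.+1)%nat.

Lemma incr_ge phi : incr phi -> forall k, (k <= phi k)%nat.
Proof. move=> h; elim=> // k IH; apply: leq_ltn_trans IH (h k). Qed.

Lemma incr_mono phi : incr phi -> forall k k', (k <= k')%nat -> (phi k <= phi k')%nat.
Proof. move=> h k k'; elim: k' => [|k' IH]; first by rewrite leqn0 => /eqP ->.
  rewrite leq_eqVlt; case/orP => [/eqP -> //|]; rewrite ltnS => /IH hh.
  apply: leq_trans hh (ltnW (h k')). Qed.

Lemma cv_sub (u : nat -> R) l phi : incr phi -> Un_cv u l -> Un_cv (fun k => u (phi k)) l.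
Proof. move=> hphi hu eps he; have [K hK] := hu eps he; exists K => k hk; apply: hK.
  apply/leP; apply: leq_trans (incr_ge hphi k); by apply/leP. Qed.

Lemma BWm (m : nat) (u : nat -> nat -> R) B : (forall k j, (j < m)%nat -> Rabs (u k j) <= B) ->
  exists phi, incr phi /\ exists l : nat -> R, forall j, (j < m)%nat -> Un_cv (fun k => u (phi k) j) (l j).
Proof.
elim: m => [|m IH] hb.
  by exists id; split => [k|]; [| exists (fun _ => 0)].
have [phi [hphi [l hl]]] := IH (fun k j hj => hb k j (ltnW hj)).
have [psi [hpsi [lm hlm]]] := BW1 (u := fun k => u (phi k) m) (fun k => hb _ _ (ltnSn m)).
exists (fun k => phi (psi k)); split.
  move=> k; apply: leq_trans (hphi _) _; apply: incr_mono => //; exact: hpsi k.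
exists (fun j => if j == m then lm else l j) => j; rewrite ltnS leq_eqVlt; case/orP=> [/eqP ->|hj].
  by rewrite eqxx.
have -> : (j == m) = false by apply/negbTE; rewrite neq_ltn hj.
exact: (cv_sub (u := fun k => u (phi k) j) hpsi (hl j hj)).
Qed.

End Part2.

Section Part3.
Local Open Scope R_scope.

Definition l1 d (x : Vec d) := \big[Rplus/0]_(i < d) Rabs (x i).
Definition ebasis d (j : 'I_d) : Vec d := fun i => if i == j then 1 else 0.
Definition vsub d (x y : Vec d) := vadd x (vopp y).

Lemma l1_ge0 d (x : Vec d) : 0 <= l1 x.
Proof. apply: sum_ge0 => i _; exact: Rabs_pos. Qed.

Lemma l1_coord d (x : Vec d) i : Rabs (x i) <= l1 x.
Proof. apply: (@sum_le_term _ (index_enum 'I_d) (fun i => Rabs (x i))); last by move=> j; exact: Rabs_pos.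
  exact: index_enum_uniq. by rewrite mem_index_enum. Qed.

Lemma l1_scale d c (x : Vec d) : l1 (vscale c x) = Rabs c * l1 x.
Proof. rewrite /l1 -sum_mull; apply: eq_bigr => i _; by rewrite /vscale Rabs_mult. Qed.

Lemma l1_tri d (x y : Vec d) : l1 (vadd x y) <= l1 x + l1 y.
Proof. rewrite /l1 -sum_add; apply: sum_le => i _; exact: Rabs_triang. Qed.

Lemma l1_eq0 d (x : Vec d) : l1 x = 0 -> x = vzero d.
Proof. move=> h; apply: vext => i; have := l1_coord x i; rewrite h => hi.
  have := Rabs_pos (x i); rewrite /vzero => h2.
  case: (Req_dec (x i) 0) => // hne; have := Rabs_pos_lt _ hne; lra. Qed.

Lemma CV_const c : Un_cv (fun _ => c) c.
Proof. move=> eps he; exists 0%nat => k _; rewrite /R_dist Rminus_diag Rabs_R0; lra. Qed.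

Lemma cv_ext (u v : nat -> R) l : (forall k, u k = v k) -> Un_cv u l -> Un_cv v l.
Proof. move=> e h eps he; have [K hK] := h eps he; exists K => k hk; rewrite -e; exact: hK. Qed.

Lemma cv_sum (I : Type) (s : seq I) (f : nat -> I -> R) (g : I -> R) :
  (forall i, Un_cv (fun k => f k i) (g i)) ->
  Un_cv (fun k => \big[Rplus/0]_(i <- s) f k i) (\big[Rplus/0]_(i <- s) g i).
Proof.
move=> h; elim: s => [|a s IH].
  rewrite big_nil; apply: (@cv_ext (fun _ => 0)); [by move=> k; rewrite big_nil|exact: CV_const].
rewrite big_cons; apply: (@cv_ext (fun k => f k a + \big[Rplus/0]_(i <- s) f k i)).
  by move=> k; rewrite big_cons.
exact: CV_plus.
Qed.

Lemma cv_abs (u : nat -> R) l : Un_cv u l -> Un_cv (fun k => Rabs (u k)) (Rabs l).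
Proof. move=> h eps he; have [K hK] := h eps he; exists K => k hk; rewrite /R_dist.
  apply: Rle_lt_trans (Rabs_triang_inv2 _ _) (hK _ hk). Qed.

Lemma cv_dist (u : nat -> R) l : Un_cv u l -> Un_cv (fun k => Rabs (u k - l)) 0.
Proof. move=> h eps he; have [K hK] := h eps he; exists K => k hk; rewrite /R_dist Rminus_0_r Rabs_Rabsolu.
  exact: hK. Qed.

Lemma BWv d (y : nat -> Vec d) B : (forall k i, Rabs (y k i) <= B) ->
  exists phi, incr phi /\ exists l : Vec d, forall i, Un_cv (fun k => y (phi k) i) (l i).
Proof.
case: d y => [|d] y hb.
  by exists id; split => [k|]; [|exists (fun _ => 0); case].
have [phi [hphi [l hl]]] := @BWm d.+1 (fun k j => y k (inord j)) B (fun k j _ => hb _ _).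
exists phi; split => //; exists (fun i => l i) => i; have := hl i (ltn_ord i).
by rewrite inord_val.
Qed.

Lemma cv_l1 d (y : nat -> Vec d) (l : Vec d) : (forall i, Un_cv (fun k => y k i) (l i)) ->
  Un_cv (fun k => l1 (vsub (y k) l)) 0 /\ Un_cv (fun k => l1 (y k)) (l1 l).
Proof.
move=> h; split.
  have -> : 0 = \big[Rplus/0]_(i < d) 0 by rewrite big1.
  apply: cv_sum => i; exact: cv_dist.
apply: cv_sum => i; exact: cv_abs.
Qed.

Lemma cv_le0 (u : nat -> R) c : Un_cv u 0 -> (forall k, c <= u k) -> c <= 0.
Proof.
move=> h hc; apply: Rnot_lt_le => hlt; have [K hK] := h c hlt; have := hK K (le_n _).
rewrite /R_dist Rminus_0_r; have := hc K; move=> h1 h2; have := Rle_abs (u K); lra.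
Qed.

Section Equiv.
Variables (d : nat) (N : Vec d -> R).
Hypothesis hN : is_norm N.

Lemma N_sum_basis (s : seq 'I_d) (x : Vec d) :
  N (fun i => \big[Rplus/0]_(j <- s) (if i == j then x j else 0)) <=
  \big[Rplus/0]_(j <- s) (Rabs (x j) * N (ebasis j)).
Proof.
elim: s => [|j s IH].
  rewrite big_nil; have -> : (fun i : 'I_d => \big[Rplus/0]_(j <- [::]) (if i == j then x j else 0)) = vzero d.
    by apply: vext => i; rewrite big_nil.
  rewrite N_zero //; lra.
rewrite big_cons.
have -> : (fun i : 'I_d => \big[Rplus/0]_(j0 <- j :: s) (if i == j0 then x j0 else 0)) =
   vadd (vscale (x j) (ebasis j)) (fun i => \big[Rplus/0]_(j0 <- s) (if i == j0 then x j0 else 0)).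
  apply: vext => i; rewrite big_cons /vadd /vscale /ebasis; case: (i == j); ring.
apply: Rle_trans (N_tri hN _ _) _; rewrite N_scale //; lra.
Qed.

Definition Sup_e := \big[Rplus/0]_(j < d) N (ebasis j).

Lemma N_le_l1 x : N x <= Sup_e * l1 x.
Proof.
have ex : x = (fun i => \big[Rplus/0]_(j <- index_enum 'I_d) (if i == j then x j else 0)).
  apply: vext => i; rewrite -big_mkcond /=.
  rewrite (eq_bigl (fun j => j == i)); first by rewrite big_pred1_eq.
  by move=> j; rewrite eq_sym.
rewrite {1}ex; apply: Rle_trans (N_sum_basis _ _) _.
have -> : Sup_e * l1 x = \big[Rplus/0]_(j <- index_enum 'I_d) (Rabs (x j) * Sup_e).
  rewrite /l1 -sum_mull; apply: eq_bigr => j _; ring.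
apply: sum_le => j _; apply: Rmult_le_compat_l; first exact: Rabs_pos.
apply: (@sum_le_term _ (index_enum 'I_d) (fun j => N (ebasis j))); [exact: index_enum_uniq| by rewrite mem_index_enum|].
move=> i; exact: N_ge0.
Qed.

Lemma Sup_e_ge0 : 0 <= Sup_e.
Proof. apply: sum_ge0 => j _; exact: N_ge0. Qed.

Lemma N_l1_lower : exists k, 0 < k /\ forall x, k * l1 x <= N x.
Proof.
apply: NNPP => hno.
have hx : forall j : nat, exists x : Vec d, N x < / INR j.+1 * l1 x.
  move=> j; apply: NNPP => hj; apply: hno; exists (/ INR j.+1); split; first exact: inv_pos.
  move=> x; apply: Rnot_lt_le => hlt; apply: hj; by exists x.
pose x j := proj1_sig (constructive_indefinite_description _ (hx j)).
have hxj : forall j, N (x j) < / INR j.+1 * l1 (x j) := fun j => proj2_sig (constructive_indefinite_description _ (hx j)).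
have hl1pos : forall j, 0 < l1 (x j).
  move=> j; have := hxj j; have := N_ge0 hN (x j); have := inv_pos j; have := l1_ge0 (x j) => h1 h2 h3 h4.
  apply: Rnot_le_lt => hle; have e : l1 (x j) = 0 by lra. rewrite e Rmult_0_r in h4; lra.
pose y j := vscale (/ l1 (x j)) (x j).
have hy1 : forall j, l1 (y j) = 1.
  move=> j; rewrite /y l1_scale Rabs_right; last by apply: Rle_ge; apply: Rlt_le; apply: Rinv_0_lt_compat.
  by field; apply: Rgt_not_eq.
have hyN : forall j, N (y j) < / INR j.+1.
  move=> j; rewrite /y N_scale // Rabs_right; last by apply: Rle_ge; apply: Rlt_le; apply: Rinv_0_lt_compat.
  have := hxj j; have := hl1pos j => hp hj.
  apply: (Rmult_lt_reg_l (l1 (x j))) => //; rewrite -Rmult_assoc Rinv_r; last by apply: Rgt_not_eq.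
  lra.
have [phi [hphi [l hl]]] := @BWv d y 1 (fun k i => Rle_trans _ _ _ (l1_coord _ _) (Req_le _ _ (hy1 k))).
have [hc1 hc2] := cv_l1 hl.
have hl1 : l1 l = 1.
  apply: (UL_sequence (fun k => l1 (y (phi k)))) => //; rewrite (_ : (fun k => l1 (y (phi k))) = fun _ => 1).
    exact: CV_const.
  by apply: functional_extensionality => k; rewrite hy1.
have hNl : N l <= 0.
  apply: (@cv_le0 (fun k => Sup_e * l1 (vsub (y (phi k)) l) + / INR (phi k).+1)).
    rewrite -(Rplus_0_l 0); apply: CV_plus.
      rewrite -(Rmult_0_r Sup_e); apply: CV_mult => //; exact: CV_const.
    apply: (@cv_sub (fun k => / INR k.+1)) => //.
    move=> eps he; have [K hK] := inv_small he; exists K => k hk; rewrite /R_dist Rminus_0_r Rabs_right.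
      apply: hK; by apply/leP.
    apply: Rle_ge; apply: Rlt_le; exact: inv_pos.
  move=> k.
  have e : l = vadd (vopp (vsub (y (phi k)) l)) (y (phi k)).
    apply: vext => i; rewrite /vadd /vopp /vsub /vadd /vopp; ring.
  rewrite {1}e; apply: Rle_trans (N_tri hN _ _) _; rewrite N_opp //.
  have := N_le_l1 (vsub (y (phi k)) l); have := hyN (phi k); lra.
have : l = vzero d by apply: (N_eq0 hN); have := N_ge0 hN l; lra.
move=> e; move: hl1; rewrite e /l1 big1 => [|i _]; [lra|by rewrite /vzero Rabs_R0].
Qed.

End Equiv.

End Part3.

Section Part4.
Local Open Scope R_scope.

Definition mxs d (M : Mat d) := \big[Rplus/0]_(i < d) \big[Rplus/0]_(j < d) Rabs (M i j).

Lemma mxs_ge0 d (M : Mat d) : 0 <= mxs M.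
Proof. apply: sum_ge0 => i _; apply: sum_ge0 => j _; exact: Rabs_pos. Qed.

Lemma l1_mv d (M : Mat d) x : l1 (mv M x) <= mxs M * l1 x.
Proof.
rewrite /l1 /mxs Rmult_comm -sum_mull; apply: sum_le => i _.
apply: Rle_trans (sum_abs _ _ _) _; rewrite -sum_mull; apply: sum_le => j _.
rewrite Rabs_mult Rmult_comm; apply: Rmult_le_compat_r; first exact: Rabs_pos.
exact: l1_coord.
Qed.

Section Ops.
Variables (d r : nat) (A : 'I_r -> Mat d) (N : Vec d -> R).
Hypothesis hN : is_norm N.

Definition kN := proj1_sig (constructive_indefinite_description _ (N_l1_lower hN)).
Lemma kN_pos : 0 < kN. Proof. exact: (proj1 (proj2_sig (constructive_indefinite_description _ (N_l1_lower hN)))). Qed.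
Lemma kN_spec x : kN * l1 x <= N x. Proof. exact: (proj2 (proj2_sig (constructive_indefinite_description _ (N_l1_lower hN))) x). Qed.

Lemma l1_le_N x : l1 x <= N x / kN.
Proof. have := kN_spec x; have := kN_pos => h1 h2. apply: (Rmult_le_reg_l kN) => //.
  rewrite /Rdiv (Rmult_comm (N x)) -Rmult_assoc Rinv_r; lra. Qed.

Definition CN (M : Mat d) := Sup_e N * mxs M / kN.
Lemma CN_ge0 M : 0 <= CN M.
Proof. rewrite /CN; apply: Rmult_le_pos; first apply: Rmult_le_pos; [exact: Sup_e_ge0| exact: mxs_ge0|].
  apply: Rlt_le; apply: Rinv_0_lt_compat; exact: kN_pos. Qed.

Lemma N_mv M x : N (mv M x) <= CN M * N x.
Proof.
apply: Rle_trans (N_le_l1 hN _) _.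
have h1 := l1_mv M x; have h2 := l1_le_N x; have h3 := Sup_e_ge0 hN; have h4 := mxs_ge0 M.
rewrite /CN; apply: Rle_trans (Rmult_le_compat_l _ _ _ h3 h1) _.
apply: Rle_trans (Rmult_le_compat_l _ _ _ h3 (Rmult_le_compat_l _ _ _ h4 h2)) _; right; rewrite /Rdiv; ring.
Qed.

Definition CA := 1 + \big[Rplus/0]_(i < r) CN (A i).
Lemma CA_ge1 : 1 <= CA.
Proof. rewrite /CA; have : 0 <= \big[Rplus/0]_(i < r) CN (A i) by apply: sum_ge0 => i _; exact: CN_ge0.
  lra. Qed.
Lemma CN_le_CA i : CN (A i) <= CA.
Proof. rewrite /CA; have : CN (A i) <= \big[Rplus/0]_(i < r) CN (A i).
    apply: (@sum_le_term _ (index_enum 'I_r) (fun i => CN (A i))); [exact: index_enum_uniq|exact: mem_index_enum|].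
    move=> j; exact: CN_ge0.
  lra. Qed.

Lemma N_act w x : N (act A w x) <= CA ^ length w * N x.
Proof.
elim: w x => [|i w IH] x /=; first lra.
apply: Rle_trans (IH _) _; rewrite (Rmult_comm CA) Rmult_assoc; apply: Rmult_le_compat_l.
  apply: pow_le; have := CA_ge1; lra.
apply: Rle_trans (N_mv _ _) _; apply: Rmult_le_compat_r; [exact: N_ge0|exact: CN_le_CA].
Qed.

Lemma opnorm_ge w x : x <> vzero d -> N (act A w x) / N x <= opnorm N (act A w).
Proof.
move=> hx; have hp := N_neq0 hN hx.
rewrite /opnorm; apply: Rsup_ge.
  exists (CA ^ length w) => y [z [hz ->]]; have := N_act w z; rewrite hz; lra.
exists (vscale (/ N x) x); split.
  rewrite N_scale // Rabs_right; last by apply: Rle_ge; apply: Rlt_le; apply: Rinv_0_lt_compat.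
  by field; apply: Rgt_not_eq.
rewrite act_scale N_scale // Rabs_right; last by apply: Rle_ge; apply: Rlt_le; apply: Rinv_0_lt_compat.
rewrite /Rdiv Rmult_comm //.
Qed.

Lemma opnorm_ge0 w x : x <> vzero d -> 0 <= opnorm N (act A w).
Proof. move=> hx; apply: Rle_trans (opnorm_ge w hx); apply: Rmult_le_pos; first exact: N_ge0.
  apply: Rlt_le; apply: Rinv_0_lt_compat; exact: N_neq0. Qed.

End Ops.

End Part4.

Section Part5.

Lemma length_size (T : Type) (s : list T) : length s = size s.
Proof. by elim: s => //= a s ->. Qed.

Fixpoint wle r (k : nat) : seq (seq 'I_r) :=
  match k with 0 => [:: [::]] | k'.+1 => [::] :: [seq rcons w i | w <- wle r k', i <- enum 'I_r] end.

Lemma wle_spec r k (w : seq 'I_r) : (w \in wle r k) = (size w <= k)%N.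
Proof.
elim: k w => [|k IH] w /=.
  by rewrite inE; case: w.
rewrite inE; case/lastP: w => [|w i] //=.
have -> : (rcons w i == [::]) = false by case: w.
rewrite /= size_rcons ltnS -IH; apply/allpairsP/idP => [[[w' i'] /= [h1 h2 /eqP]]|h].
  by rewrite eqseq_rcons => /andP [/eqP -> _].
by exists (w, i); split => //; rewrite mem_enum.
Qed.

Import GRing.Theory.
Local Open Scope ring_scope.

Section Kry.
Variables (d r : nat) (A : 'I_r -> Mat d).

Definition rv (x : Vec d) : 'rV[R]_d := \row_i x i.
Definition Mt (M : Mat d) : 'M[R]_d := \matrix_(i, j) M j i.
Definition Mx k (x : Vec d) : 'M[R]_(size (wle r k), d) :=
  \matrix_(j, i) act A (nth [::] (wle r k) j) x i.

Lemma rv_mv M x : rv (mv M x) = rv x *m Mt M.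
Proof. apply/rowP => j; rewrite !mxE /mv; apply: eq_bigr => i _; rewrite !mxE; exact: mulrC. Qed.

Lemma rv_add x y : rv (vadd x y) = rv x + rv y.
Proof. by apply/rowP => j; rewrite !mxE. Qed.
Lemma rv_scale c x : rv (vscale c x) = c *: rv x.
Proof. by apply/rowP => j; rewrite !mxE. Qed.
Lemma rv_zero : rv (vzero d) = 0.
Proof. by apply/rowP => j; rewrite !mxE. Qed.
Lemma rv_inj x y : rv x = rv y -> x = y.
Proof. move=> h; apply: vext => i; have := congr1 (fun u : 'rV_d => u 0 i) h; by rewrite !mxE. Qed.

Lemma row_Mx k x j : row j (Mx k x) = rv (act A (nth [::] (wle r k) j) x).
Proof. by apply/rowP => i; rewrite !mxE. Qed.

Lemma act_rcons w i x : act A (rcons w i) x = mv (A i) (act A w x).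
Proof. by rewrite -cats1 act_cat. Qed.

Lemma rowin k x w : (size w <= k)%N -> (rv (act A w x) <= Mx k x)%MS.
Proof.
rewrite -wle_spec => hw; have hi : (index w (wle r k) < size (wle r k))%N by rewrite index_mem.
by rewrite -[w](nth_index [::] hw) -(@row_Mx k x (Ordinal hi)) row_sub.
Qed.

Lemma Mx_mono k k' x : (k <= k')%N -> (Mx k x <= Mx k' x)%MS.
Proof.
move=> hk; apply/row_subP => j; rewrite row_Mx; apply: rowin.
have : nth [::] (wle r k) j \in wle r k by apply: mem_nth.
by rewrite wle_spec => h; apply: leq_trans h hk.
Qed.

Lemma Mx_mul k x i : (Mx k x *m Mt (A i) <= Mx k.+1 x)%MS.
Proof.
apply/row_subP => j; rewrite row_mul row_Mx -rv_mv -act_rcons; apply: rowin.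
have : nth [::] (wle r k) j \in wle r k by apply: mem_nth.
by rewrite wle_spec size_rcons.
Qed.

Definition stable k x := (Mx k.+1 x <= Mx k x)%MS.

Lemma stable_next k x : stable k x -> stable k.+1 x.
Proof.
move=> hs; apply/row_subP => j; rewrite row_Mx.
have : nth [::] (wle r k.+2) j \in wle r k.+2 by apply: mem_nth.
rewrite wle_spec; case/lastP: (nth [::] (wle r k.+2) j) => [|w i] h; first by apply: rowin.
rewrite size_rcons ltnS in h.
rewrite act_rcons rv_mv; apply: submx_trans (Mx_mul k x i).
apply: submxMr; apply: submx_trans hs; exact: rowin.
Qed.

Lemma stable_after j x : stable j x -> forall k, (j <= k)%N -> (Mx k x <= Mx j x)%MS.
Proof.
move=> hs k; elim: k => [|k IH]; first by rewrite leqn0 => /eqP ->.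
rewrite leq_eqVlt; case/orP => [/eqP <- //|]; rewrite ltnS => hk.
apply: submx_trans (IH hk); have : stable k x.
  elim: k hk {IH} => [|k IHk]; first by rewrite leqn0 => /eqP <-.
  rewrite leq_eqVlt; case/orP => [/eqP <- //|]; rewrite ltnS => hk; exact: stable_next (IHk hk).
by [].
Qed.

Lemma exists_stable x : x <> vzero d -> exists2 j, (j < d)%N & stable j x.
Proof.
move=> hx.
have H : forall k, (exists2 j, (j < k)%N & stable j x) \/ (k < \rank (Mx k x))%N.
  elim=> [|k IH].
    right; rewrite lt0n mxrank_eq0; apply/eqP => h.
    have : row (Ordinal (index_mem [::] (wle r 0))) (Mx 0 x) = 0 by rewrite h; apply/rowP => i; rewrite !mxE.
    rewrite row_Mx /= => h2; apply: hx; apply: rv_inj; rewrite h2 rv_zero //.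
  case: IH => [[j hj hs]|hr]; first by left; exists j => //; apply: ltnW.
  case hs : (stable k x); first by left; exists k.
  right; apply: leq_ltn_trans hr _; rewrite (ltn_leqif (mxrank_leqif_sup (Mx_mono x (leqnSn k)))).
  by move: hs; rewrite /stable => ->.
case: (H d) => // hr; exfalso; have := rank_leq_col (Mx d x); rewrite leqNgt hr //.
Qed.

Lemma krylov x p : irreducible A -> x <> vzero d -> (d - 1 <= p)%N -> (1%:M <= Mx p x)%MS.
Proof.
move=> hirr hx hp; have [j hj hs] := exists_stable hx.
have hjp : (j <= p)%N by apply: leq_trans hp; rewrite -ltnS; case: (d) hj => // d' h; rewrite subn1 /=.
pose V := fun z => (rv z <= Mx p x)%MS.
have hsub : subspace V.
  split; first by rewrite /V rv_zero sub0mx.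
  split; first by move=> a b ha hb; rewrite /V rv_add addmx_sub.
  by move=> c a ha; rewrite /V rv_scale scalemx_sub.
have hinv : forall i z, V z -> V (mv (A i) z).
  move=> i z hz; rewrite /V rv_mv; apply: submx_trans (submxMr _ hz) _.
  apply: submx_trans (Mx_mul p x i) _; apply: submx_trans (Mx_mono x hjp).
  apply: (@stable_after j x hs p.+1); apply: leq_trans hjp _; exact: leqnSn.
case: (hirr V hsub hinv) => [h|h].
  exfalso; apply: hx; apply/h; rewrite /V; exact: (@rowin p x [::] (leq0n p)).
apply/row_subP => i; have -> : row i (1%:M : 'M[R]_d) = rv (ebasis i).
  by apply/rowP => j'; rewrite !mxE /ebasis eq_sym; case: (j' == i).
exact: h.
Qed.

End Kry.

End Part5.

Section Part6.
Import GRing.Theory.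
Local Open Scope R_scope.

Definition rl1 n (u : 'rV[R]_n) := \big[Rplus/0]_(j < n) Rabs (u ord0 j).
Definition mn a b (Q : 'M[R]_(a, b)) := \big[Rplus/0]_(i < a) \big[Rplus/0]_(j < b) Rabs (Q i j).

Lemma rl1_ge0 n (u : 'rV_n) : 0 <= rl1 u.
Proof. apply: sum_ge0 => j _; exact: Rabs_pos. Qed.
Lemma mn_ge0 a b (Q : 'M_(a,b)) : 0 <= mn Q.
Proof. apply: sum_ge0 => i _; apply: sum_ge0 => j _; exact: Rabs_pos. Qed.

Lemma rl1_mul a b (u : 'rV_a) (Q : 'M_(a, b)) : rl1 (u *m Q)%R <= rl1 u * mn Q.
Proof.
rewrite /rl1 /mn.
have e : forall j, Rabs ((u *m Q)%R ord0 j) <= \big[Rplus/0]_(i < a) (Rabs (u ord0 i) * Rabs (Q i j)).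
  move=> j; rewrite mxE; apply: Rle_trans (sum_abs _ _ _) _; apply: sum_le => i _; rewrite Rabs_mult; lra.
apply: Rle_trans (sum_le _ (fun j _ => e j)) _.
rewrite (exchange_big_dep xpredT) //=.
rewrite [X in _ <= X]Rmult_comm -sum_mull; apply: sum_le => i _; rewrite sum_mull Rmult_comm.
apply: Rmult_le_compat_r; first exact: Rabs_pos.
apply: (@sum_le_term _ (index_enum 'I_a) (fun i => \big[Rplus/0]_(j < b) Rabs (Q i j))).
- exact: index_enum_uniq.
- exact: mem_index_enum.
- move=> k; apply: sum_ge0 => j _; exact: Rabs_pos.
Qed.

Lemma rl1_add n (u v : 'rV_n) : rl1 (u + v)%R <= rl1 u + rl1 v.
Proof. rewrite /rl1 -sum_add; apply: sum_le => j _; rewrite mxE; exact: Rabs_triang. Qed.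
Lemma rl1_opp n (u : 'rV_n) : rl1 (- u)%R = rl1 u.
Proof. rewrite /rl1; apply: eq_bigr => j _; rewrite mxE; exact: Rabs_Ropp. Qed.
Lemma rl1_eq0 n (u : 'rV_n) : rl1 u <= 0 -> u = 0%R.
Proof.
move=> h; apply/rowP => j; rewrite mxE.
have : Rabs (u ord0 j) <= rl1 u.
  apply: (@sum_le_term _ (index_enum 'I_n) (fun j => Rabs (u ord0 j))); [exact: index_enum_uniq|exact: mem_index_enum|].
  move=> k; exact: Rabs_pos.
move=> h2; case: (Req_dec (u ord0 j) 0) => // hne; have := Rabs_pos_lt _ hne; lra.
Qed.
Lemma rl1_rv d (z : Vec d) : rl1 (rv z) = l1 z.
Proof. rewrite /rl1 /l1; apply: eq_bigr => j _; by rewrite mxE. Qed.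

Lemma rl1_half n (u z F : 'rV_n) : u = (z - F)%R -> rl1 F <= rl1 u / 2 -> rl1 u <= 2 * rl1 z.
Proof. move=> e h; have := rl1_add z (- F)%R; rewrite rl1_opp -e; lra. Qed.

Lemma inj_unit n (P : 'M[R]_n) : (forall u : 'rV_n, (u *m P)%R = 0%R -> u = 0%R) -> P \in unitmx.
Proof.
move=> h; rewrite -row_free_unit -kermx_eq0; apply/eqP/row_matrixP => i; rewrite row0; apply: h.
by rewrite -row_mul mulmx_ker row0.
Qed.

Section Loc.
Variables (d r : nat) (A : 'I_r -> Mat d) (p : nat).

Definition Cl := 1 + \big[Rplus/0]_(i < r) mxs (A i).
Lemma Cl_ge1 : 1 <= Cl.
Proof. rewrite /Cl; have : 0 <= \big[Rplus/0]_(i < r) mxs (A i) by apply: sum_ge0 => i _; exact: mxs_ge0.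
  lra. Qed.
Lemma mxs_le_Cl i : mxs (A i) <= Cl.
Proof. rewrite /Cl; have : mxs (A i) <= \big[Rplus/0]_(i < r) mxs (A i).
    apply: (@sum_le_term _ (index_enum 'I_r) (fun i => mxs (A i))); [exact: index_enum_uniq|exact: mem_index_enum|].
    move=> j; exact: mxs_ge0.
  lra. Qed.

Lemma l1_act w z : l1 (act A w z) <= Cl ^ length w * l1 z.
Proof.
elim: w z => [|i w IH] z /=; first lra.
apply: Rle_trans (IH _) _; rewrite (Rmult_comm Cl) Rmult_assoc; apply: Rmult_le_compat_l.
  apply: pow_le; have := Cl_ge1; lra.
apply: Rle_trans (l1_mv _ _) _; apply: Rmult_le_compat_r; [exact: l1_ge0|exact: mxs_le_Cl].
Qed.

Definition Gx := \big[Rplus/0]_(j < size (wle r p)) Cl ^ p.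

Lemma mn_Mx z : mn (Mx A p z) <= Gx * l1 z.
Proof.
rewrite /mn /Gx Rmult_comm -sum_mull; apply: sum_le => j _.
have -> : \big[Rplus/0]_(j0 < d) Rabs (Mx A p z j j0) = l1 (act A (nth [::] (wle r p) j) z).
  by apply: eq_bigr => i _; rewrite mxE.
apply: Rle_trans (l1_act _ _) _; rewrite [X in _ <= X]Rmult_comm; apply: Rmult_le_compat_r; first exact: l1_ge0.
apply: Rle_pow; first exact: Cl_ge1.
have : nth [::] (wle r p) j \in wle r p by apply: mem_nth.
by rewrite wle_spec length_size => h; apply/leP.
Qed.

Lemma Mx_sub y x : (Mx A p y - Mx A p x)%R = Mx A p (vsub y x).
Proof. apply/matrixP => i j; rewrite !mxE /vsub act_add act_opp //. Qed.

Lemma local_inv x : irreducible A -> x <> vzero d -> (d - 1 <= p)%nat ->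
  exists rho0, 0 < rho0 /\ exists Cx, 0 <= Cx /\
  forall y, l1 (vsub y x) <= rho0 -> forall z : 'rV_d,
    exists a : 'rV_(size (wle r p)), (a *m Mx A p y)%R = z /\ rl1 a <= Cx * rl1 z.
Proof.
move=> hirr hx hp.
have hk := krylov hirr hx hp.
set B := pinvmx (Mx A p x).
have hB : (B *m Mx A p x)%R = 1%:M%R by have := mulmxKpV hk; rewrite mul1mx.
set b := mn B.
have hb : 0 <= b := mn_ge0 B.
have hG : 0 <= Gx by apply: sum_ge0 => j _; apply: pow_le; have := Cl_ge1; lra.
exists (/ (2 * (b * Gx + 1))); split.
  apply: Rinv_0_lt_compat; have := Rmult_le_pos _ _ hb hG; lra.
exists (2 * b); split; first lra.
move=> y hy z.
set E := (B *m Mx A p (vsub y x))%R.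
have hP : (B *m Mx A p y)%R = (1%:M + E)%R.
  by rewrite /E -Mx_sub mulmxBr hB addrC addrNK.
have hE : forall u : 'rV_d, rl1 (u *m E)%R <= rl1 u / 2.
  move=> u; rewrite /E mulmxA; apply: Rle_trans (rl1_mul _ _) _.
  apply: Rle_trans (Rmult_le_compat_l _ _ _ (rl1_ge0 _) (mn_Mx _)) _.
  have h1 := rl1_mul u B; have h2 := l1_ge0 (vsub y x); have h3 := rl1_ge0 u.
  have h4 : b * Gx * l1 (vsub y x) <= / 2.
    have hpos : 0 < 2 * (b * Gx + 1) by have := Rmult_le_pos _ _ hb hG; lra.
    apply: Rle_trans (Rmult_le_compat_l _ _ _ (Rmult_le_pos _ _ hb hG) hy) _.
    apply: (Rmult_le_reg_l (2 * (b * Gx + 1))) => //.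
    have ht := Rmult_le_pos _ _ hb hG.
    have -> : 2 * (b * Gx + 1) * (b * Gx * / (2 * (b * Gx + 1))) = b * Gx by field; lra.
    have -> : 2 * (b * Gx + 1) * / 2 = b * Gx + 1 by field.
    lra.
  apply: Rle_trans (Rmult_le_compat_r _ _ _ (Rmult_le_pos _ _ hG h2) h1) _.
  have -> : rl1 u * b * (Gx * l1 (vsub y x)) = rl1 u * (b * Gx * l1 (vsub y x)) by ring.
  rewrite /Rdiv; apply: Rmult_le_compat_l => //.
have hU : (B *m Mx A p y)%R \in unitmx.
  apply: inj_unit => u hu; apply: rl1_eq0.
  move: hu; rewrite hP mulmxDr mulmx1 => /eqP; rewrite addr_eq0 => /eqP hu.
  have e : rl1 u = rl1 (u *m E)%R by rewrite {1}hu rl1_opp.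
  have h' : rl1 u <= rl1 u / 2 := Rle_trans _ _ _ (Req_le _ _ e) (hE u).
  have := rl1_ge0 u; lra.
pose u := (z *m invmx (B *m Mx A p y))%R.
have hu : (u *m (B *m Mx A p y))%R = z by rewrite /u mulmxKV.
exists (u *m B)%R; split; first by rewrite -mulmxA.
have hul : rl1 u <= 2 * rl1 z.
  have e : u = (z - u *m E)%R by rewrite -hu hP mulmxDr mulmx1 addrK.
  exact: (rl1_half e (hE u)).
apply: Rle_trans (rl1_mul _ _) _; rewrite -/b; have := rl1_ge0 z.
have := Rmult_le_compat_r _ _ _ hb hul; lra.
Qed.

End Loc.

End Part6.

Section Part7.
Import GRing.Theory.
Local Open Scope R_scope.

Lemma wsum_app d (l1 l2 : list (R * Vec d)) : wsum (l1 ++ l2) = vadd (wsum l1) (wsum l2).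
Proof. elim: l1 => [|[c v] l IH] /=; first by apply: vext => i; rewrite /vadd /vzero; ring.
  rewrite IH; apply: vext => i; rewrite /vadd; ring. Qed.

Lemma wsum_map d (I : Type) (s : seq I) (f : I -> R * Vec d) i :
  wsum (map f s) i = \big[Rplus/0]_(j <- s) ((f j).1 * (f j).2 i).
Proof. elim: s => [|a s IH] /=; first by rewrite big_nil. rewrite big_cons -IH.
  by case: (f a) => c v; rewrite /vadd /vscale. Qed.

Lemma fold_map (I T : Type) (s : seq I) (f : I -> R * T) :
  fold_right Rplus 0 (map fst (map f s)) = \big[Rplus/0]_(j <- s) (f j).1.
Proof. elim: s => [|a s IH] /=; first by rewrite big_nil. by rewrite big_cons IH. Qed.

Lemma fold_cat (l1 l2 : seq R) : fold_right Rplus 0 (l1 ++ l2) = fold_right Rplus 0 l1 + fold_right Rplus 0 l2.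
Proof. elim: l1 => [|a l IH] /=; [ring| rewrite IH; ring]. Qed.

Lemma sum_delta (I : eqType) (s : seq I) j (c : R) : j \in s -> uniq s ->
  \big[Rplus/0]_(j' <- s) (if j' == j then c else 0) = c.
Proof. move=> hj hu; rewrite (bigD1_seq j) //= eqxx big1 => [|k /negbTE ->] //; ring. Qed.

Section Chi.
Variables (d r : nat) (A : 'I_r -> Mat d) (N : Vec d -> R) (p : nat).
Hypothesis hN : is_norm N.

Definition Sx x := fun v => Ap_img A p x v \/ Ap_img A p (vopp x) v.
Definition Tx x := fun t => 0 <= t /\ (forall y, ball N t y -> conv (Sx x) y).

Lemma conv_from_coef (y z : Vec d) (a : 'rV_(size (wle r p))) :
  (a *m Mx A p y)%R = rv z -> rl1 a <= 1 -> conv (Sx y) z.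
Proof.
move=> ha hl.
set w := fun j : 'I_(size (wle r p)) => nth [::] (wle r p) j.
have hw : forall j, (length (w j) <= p)%nat.
  move=> j; rewrite length_size -(@wle_spec r); exact: mem_nth.
set F := fun j : 'I_(size (wle r p)) => (Rabs (a ord0 j),
   if Rle_dec 0 (a ord0 j) then act A (w j) y else act A (w j) (vopp y)).
set s := rl1 a.
exists (map F (index_enum _) ++ [:: ((1 - s) / 2, y); ((1 - s) / 2, vopp y)]); split; [|split].
- move=> cv hcv; case: (in_app_or _ _ _ hcv).
    case/in_map_iff => j [<- _]; split; first exact: Rabs_pos.
    rewrite /F /=; case: (Rle_dec 0 (a ord0 j)) => h0; [left|right]; by exists (w j); split.
  have hs : s <= 1 := hl.
  case=> [<-|[<-|//]] /=; (split; [lra|]); [left|right]; exists [::]; split => //.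
- rewrite map_cat fold_cat fold_map /=.
  have -> : \big[Rplus/0]_(j <- index_enum _) (F j).1 = s by [].
  lra.
- apply: vext => i; rewrite wsum_app /vadd wsum_map /= /vadd /vscale /wsum /vzero.
  have -> : z i = (rv z) ord0 i by rewrite mxE.
  rewrite -ha mxE.
  have -> : \big[Rplus/0]_(j <- index_enum 'I_(size (wle r p))) ((F j).1 * (F j).2 i) =
            \big[Rplus/0]_(j < size (wle r p)) (a ord0 j * Mx A p y j i).
    apply: eq_bigr => j _; rewrite /F /= mxE; case: Rle_dec => h.
      by rewrite /= Rabs_right; [|lra].
    rewrite /= Rabs_left; last lra. rewrite act_opp /vopp /w; ring.
  transitivity (\big[Rplus/0]_(j < size (wle r p)) (a ord0 j * Mx A p y j i)); first reflexivity.
  rewrite /vopp; ring.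
Qed.

Lemma N_wsum (l : list (R * Vec d)) M : (forall cv, In cv l -> 0 <= fst cv /\ N (snd cv) <= M) ->
  N (wsum l) <= fold_right Rplus 0 (map fst l) * M.
Proof.
elim: l => [|[c v] l IH] /= h; first by rewrite N_zero //; lra.
apply: Rle_trans (N_tri hN _ _) _; rewrite N_scale //.
have [/= h1 h2] := h (c, v) (or_introl erefl).
have := IH (fun cv hcv => h cv (or_intror hcv)); rewrite Rabs_right; last lra.
have := Rmult_le_compat_l _ _ _ h1 h2; lra.
Qed.

Lemma conv_bound x y : conv (Sx x) y -> N y <= CA A hN ^ p * N x.
Proof.
move=> [l [h1 [h2 ->]]]; have := @N_wsum l (CA A hN ^ p * N x); rewrite h2 Rmult_1_l; apply.
move=> cv hcv; have [hc hs] := h1 cv hcv; split => //.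
have hpow : forall w : seq 'I_r, (length w <= p)%nat -> CA A hN ^ length w <= CA A hN ^ p.
  by move=> w hw; apply: Rle_pow; [exact: CA_ge1|apply/leP].
case: hs => [[w [hw ->]]|[w [hw ->]]]; apply: Rle_trans (N_act _ _ _ _) _;
  [|rewrite N_opp //]; apply: Rmult_le_compat_r; [exact: N_ge0|by apply: hpow|exact: N_ge0|by apply: hpow].
Qed.

Lemma Tx_lub x e0 : N e0 = 1 -> is_lub (Tx x) (Rsup (Tx x)).
Proof.
move=> he0; apply: Rsup_lub.
  exists 0; split; first lra; move=> y hy.
  have hy0 : y = vzero d by apply: (@N_eq0 d N hN); have := N_ge0 hN y; rewrite /ball in hy; lra.
  exists [:: (/2, x); (/2, vopp x)]; split; [|split].
  + move=> cv [<-|[<-|//]] /=; split; try lra; [left|right]; exists [::]; split => //; apply/leP.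
  + simpl; field.
  + rewrite hy0; apply: vext => i; rewrite /= /vadd /vscale /vopp /vzero; field.
exists (CA A hN ^ p * N x) => t [ht hb].
have hb' : ball N t (vscale t e0) by rewrite /ball N_scale // he0 Rabs_right; lra.
have := conv_bound (hb _ hb'); rewrite N_scale // he0 Rabs_right; lra.
Qed.

End Chi.

End Part7.

Section Part8.
Import GRing.Theory.
Local Open Scope R_scope.

Section Comp.
Variables (d r : nat) (A : 'I_r -> Mat d) (N : Vec d -> R) (p : nat).
Hypothesis hN : is_norm N.
Hypothesis hirr : irreducible A.
Hypothesis hp : (d - 1 <= p)%nat.
Variable e0 : Vec d.
Hypothesis he0 : N e0 = 1.

Lemma local_T x : x <> vzero d -> exists rho0, 0 < rho0 /\ exists delta, 0 < delta /\
  forall y, l1 (vsub y x) <= rho0 -> Tx A N p y delta.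
Proof.
move=> hx; have [rho0 [hr [Cx [hC hloc]]]] := local_inv hirr hx hp.
have hk := kN_pos hN.
exists rho0; split => //; exists (kN hN / (Cx + 1)); split.
  apply: Rmult_lt_0_compat => //; apply: Rinv_0_lt_compat; lra.
move=> y hy; split; first by apply: Rlt_le; apply: Rmult_lt_0_compat => //; apply: Rinv_0_lt_compat; lra.
move=> z hz; have [a [ha hal]] := hloc y hy (rv z).
apply: (conv_from_coef ha); apply: Rle_trans hal _; rewrite rl1_rv.
have h1 := l1_le_N hN z; rewrite /ball in hz.
have h2 : l1 z <= / (Cx + 1).
  apply: Rle_trans h1 _; rewrite /Rdiv; apply: (Rmult_le_reg_l (kN hN)) => //.
  rewrite -Rmult_assoc (Rmult_comm (kN hN)) Rmult_assoc Rinv_r; last lra.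
  move: hz; rewrite /Rdiv; lra.
have h3 : Cx * / (Cx + 1) <= 1.
  apply: (Rmult_le_reg_l (Cx + 1)); first lra.
  rewrite -Rmult_assoc (Rmult_comm (Cx + 1)) Rmult_assoc Rinv_r; lra.
have := Rmult_le_compat_l _ _ _ hC h2; lra.
Qed.

Lemma Tx_lower : exists delta, 0 < delta /\ forall x, N x = 1 -> delta <= Rsup (Tx A N p x).
Proof.
apply: NNPP => hno.
have hx : forall j : nat, exists x, N x = 1 /\ Rsup (Tx A N p x) < / INR j.+1.
  move=> j; apply: NNPP => hj; apply: hno; exists (/ INR j.+1); split; first exact: inv_pos.
  move=> x hx1; apply: Rnot_lt_le => hlt; apply: hj; by exists x.
pose x j := proj1_sig (constructive_indefinite_description _ (hx j)).
have hxj : forall j, N (x j) = 1 /\ Rsup (Tx A N p (x j)) < / INR j.+1 :=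
  fun j => proj2_sig (constructive_indefinite_description _ (hx j)).
have hk := kN_pos hN.
have hb : forall k i, Rabs (x k i) <= / kN hN.
  move=> k i; apply: Rle_trans (l1_coord _ i) _; apply: Rle_trans (l1_le_N hN _) _.
  rewrite (proj1 (hxj k)); lra.
have [phi [hphi [l hl]]] := BWv hb.
have [hc1 _] := cv_l1 hl.
have hNl : N l = 1.
  have hcv : Un_cv (fun k => Sup_e N * l1 (vsub (x (phi k)) l)) 0.
    rewrite -(Rmult_0_r (Sup_e N)); apply: CV_mult => //; exact: CV_const.
  have e1 : N l - 1 <= 0.
    apply: (cv_le0 hcv) => k.
    have e : l = vadd (vopp (vsub (x (phi k)) l)) (x (phi k)).
      by apply: vext => i; rewrite /vadd /vopp /vsub /vadd /vopp; ring.
    have := N_tri hN (vopp (vsub (x (phi k)) l)) (x (phi k)); rewrite -e N_opp // (proj1 (hxj _)).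
    have := N_le_l1 hN (vsub (x (phi k)) l); lra.
  have e2 : 1 - N l <= 0.
    apply: (cv_le0 hcv) => k.
    have e : x (phi k) = vadd (vsub (x (phi k)) l) l.
      by apply: vext => i; rewrite /vadd /vopp /vsub /vadd /vopp; ring.
    have := N_tri hN (vsub (x (phi k)) l) l; rewrite -e (proj1 (hxj _)).
    have := N_le_l1 hN (vsub (x (phi k)) l); lra.
  lra.
have hl0 : l <> vzero d by move=> e; move: hNl; rewrite e N_zero //; lra.
have [rho0 [hr [delta [hd hT]]]] := local_T hl0.
have [K1 hK1] := hc1 rho0 hr.
have [K2 hK2] := inv_small hd.
pose k := maxn K1 K2.
have hk1 : l1 (vsub (x (phi k)) l) <= rho0.
  have h := hK1 k (leP (leq_maxl _ _)); rewrite /R_dist Rminus_0_r Rabs_right in h; first exact: (Rlt_le _ _ h).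
  apply: Rle_ge; exact: l1_ge0.
have h1 : delta <= Rsup (Tx A N p (x (phi k))).
  have [h _] := @Tx_lub d r A N p hN (x (phi k)) e0 he0; apply: h; exact: hT.
have h2 := proj2 (hxj (phi k)).
have h3 := hK2 (phi k) (leq_trans (leq_maxr K1 K2) (incr_ge hphi k)).
lra.
Qed.

End Comp.

End Part8.

Section Part9.
Import GRing.Theory.
Local Open Scope R_scope.

Lemma cv_sum_in (s : seq nat) (f : nat -> nat -> R) (g : nat -> R) :
  (forall i, i \in s -> Un_cv (fun k => f k i) (g i)) ->
  Un_cv (fun k => \big[Rplus/0]_(i <- s) f k i) (\big[Rplus/0]_(i <- s) g i).
Proof.
elim: s => [|a s IH] h.
  rewrite big_nil; apply: (@cv_ext (fun _ => 0)); [by move=> k; rewrite big_nil|exact: CV_const].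
rewrite big_cons; apply: (@cv_ext (fun k => f k a + \big[Rplus/0]_(i <- s) f k i)).
  by move=> k; rewrite big_cons.
apply: CV_plus; first by apply: h; rewrite inE eqxx.
by apply: IH => i hi; apply: h; rewrite inE hi orbT.
Qed.

Lemma In_in (T : eqType) (a : T) (s : seq T) : In a s -> a \in s.
Proof. elim: s => //= b s IH [->|h]; rewrite inE ?eqxx //; by rewrite IH ?orbT. Qed.

Lemma cv_ge0 (u : nat -> R) l : Un_cv u l -> (forall k, 0 <= u k) -> 0 <= l.
Proof.
move=> h hp; apply: Rnot_lt_le => hl; have [K hK] := h (- l) ltac:(lra).
have := hK K (le_n _); rewrite /R_dist => h1; have := Rle_abs (u K - l); have := hp K.
have := Rle_abs (- (u K - l)); rewrite Rabs_Ropp; lra.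
Qed.

Lemma cv_inv2 : Un_cv (fun k => / INR k.+2) 0.
Proof.
move=> eps he; have [K hK] := inv_small he; exists K => k hk; rewrite /R_dist Rminus_0_r Rabs_right.
  apply: hK; apply: leq_trans (leqnSn k); by apply/leP.
apply: Rle_ge; apply: Rlt_le; exact: inv_pos.
Qed.

Section Att.
Variables (d r : nat) (A : 'I_r -> Mat d) (N : Vec d -> R) (p : nat).
Hypothesis hN : is_norm N.
Variable x : Vec d.

Definition Wp := wle r p.
Definition Lc : seq (Vec d) := map (fun w => act A w x) Wp ++ map (fun w => act A w (vopp x)) Wp.
Definition mc := size Lc.

Lemma Lc_S j : (j < mc)%N -> Sx A p x (nth (vzero d) Lc j).
Proof.
rewrite /mc /Lc size_cat !size_map nth_cat size_map => hj.
case: ltnP => h.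
  left; exists (nth [::] Wp j); split; last by rewrite (nth_map [::]).
  rewrite length_size -(@wle_spec r); exact: mem_nth.
right; exists (nth [::] Wp (j - size Wp)); split; last by rewrite (nth_map [::]) // ltn_subLR.
rewrite length_size -(@wle_spec r); apply: mem_nth; by rewrite ltn_subLR.
Qed.

Lemma S_Lc v : Sx A p x v -> exists2 j, (j < mc)%N & nth (vzero d) Lc j = v.
Proof.
rewrite /mc /Lc size_cat !size_map.
case=> [[w [hw ->]]|[w [hw ->]]]; have hwW : w \in Wp by rewrite /Wp wle_spec -length_size.
  exists (index w Wp); first by apply: ltn_addr; rewrite index_mem.
  by rewrite nth_cat size_map index_mem hwW (nth_map [::]) ?index_mem // nth_index.
exists (size Wp + index w Wp)%N; first by rewrite ltn_add2l index_mem.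
by rewrite nth_cat size_map ltnNge leq_addr /= addKn (nth_map [::]) ?index_mem // nth_index.
Qed.

Lemma conv_weights y : conv (Sx A p x) y -> exists lam : nat -> R,
  (forall j, 0 <= lam j) /\ \big[Rplus/0]_(j <- iota 0 mc) lam j = 1 /\
  forall i, y i = \big[Rplus/0]_(j <- iota 0 mc) (lam j * nth (vzero d) Lc j i).
Proof.
move=> [l [hl [h1 ->]]]; rewrite -h1.
elim: l hl {h1} => [|[c v] l IH] hl /=.
  exists (fun _ => 0); split; first by move=> j; lra.
  split; first by rewrite big1.
  by move=> i; rewrite /vzero big1 // => j _; ring.
have [/= hc hv] := hl (c, v) (or_introl erefl).
have [lam [hl1 [hl2 hl3]]] := IH (fun cv h => hl cv (or_intror h)).
have [j hj hjv] := S_Lc hv.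
have hjin : j \in iota 0 mc by rewrite mem_iota.
exists (fun j' => lam j' + if j' == j then c else 0); split; [|split].
- move=> j'; have := hl1 j'; case: (j' == j); lra.
- by rewrite sum_add hl2 sum_delta ?iota_uniq // Rplus_comm.
- move=> i; rewrite /vadd /vscale hl3.
  have -> : \big[Rplus/0]_(j0 <- iota 0 mc) ((lam j0 + (if j0 == j then c else 0)) * nth (vzero d) Lc j0 i) =
    \big[Rplus/0]_(j0 <- iota 0 mc) (lam j0 * nth (vzero d) Lc j0 i) +
    \big[Rplus/0]_(j0 <- iota 0 mc) (if j0 == j then c * nth (vzero d) Lc j i else 0).
    rewrite -sum_add; apply: eq_bigr => j0 _; case: eqP => [->|_]; ring.
  rewrite sum_delta ?iota_uniq // hjv; exact: Rplus_comm.
Qed.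

Lemma weights_conv y (lam : nat -> R) : (forall j, (j < mc)%N -> 0 <= lam j) ->
  \big[Rplus/0]_(j <- iota 0 mc) lam j = 1 ->
  (forall i, y i = \big[Rplus/0]_(j <- iota 0 mc) (lam j * nth (vzero d) Lc j i)) ->
  conv (Sx A p x) y.
Proof.
move=> h0 h1 h2; exists (map (fun j => (lam j, nth (vzero d) Lc j)) (iota 0 mc)); split; [|split].
- move=> cv /in_map_iff [j [<- hj]] /=.
  have hj' : (j < mc)%N by move: (In_in hj); rewrite mem_iota.
  split; [exact: h0|exact: Lc_S].
- by rewrite fold_map.
- by apply: vext => i; rewrite wsum_map h2.
Qed.

End Att.

End Part9.

Section Part10.
Import GRing.Theory.
Local Open Scope R_scope.

Section Att2.
Variables (d r : nat) (A : 'I_r -> Mat d) (N : Vec d -> R) (p : nat).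
Hypothesis hN : is_norm N.
Variable x : Vec d.
Hypothesis hlub : is_lub (Tx A N p x) (Rsup (Tx A N p x)).
Hypothesis hspos : 0 < Rsup (Tx A N p x).

Lemma attain y : N y <= Rsup (Tx A N p x) -> conv (Sx A p x) y.
Proof.
move=> hy; have hlub' := hlub; have hsp := hspos; set s := Rsup (Tx A N p x) in hy hlub' hsp.
have hc : forall k : nat, 0 < 1 - / INR k.+2 < 1.
  move=> k; have h2 : 2 <= INR k.+2.
    have -> : 2 = INR 2 by rewrite /= ; ring.
    apply: le_INR; apply/leP; done.
  have := inv_pos k.+1; have : / INR k.+2 <= / 2 by apply: Rinv_le_contravar => //; lra.
  lra.
have hyk : forall k, conv (Sx A p x) (vscale (1 - / INR k.+2) y).
  move=> k; have [hc1 hc2] := hc k.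
  have hN1 : N (vscale (1 - / INR k.+2) y) < s.
    rewrite N_scale // Rabs_right; last lra.
    have := N_ge0 hN y => h0.
    have : (1 - / INR k.+2) * N y <= (1 - / INR k.+2) * s by apply: Rmult_le_compat_l; lra.
    nra.
  have [t [ht hlt]] : exists t, Tx A N p x t /\ N (vscale (1 - / INR k.+2) y) < t.
    apply: NNPP => hno.
    have : s <= N (vscale (1 - / INR k.+2) y).
      apply: (proj2 hlub') => t ht; apply: Rnot_lt_le => hlt; apply: hno; by exists t.
    lra.
  apply: (proj2 ht); rewrite /ball; lra.
pose lam k := proj1_sig (constructive_indefinite_description _ (conv_weights (hyk k))).
have hlam : forall k, (forall j, 0 <= lam k j) /\ \big[Rplus/0]_(j <- iota 0 (mc A p x)) lam k j = 1 /\
   forall i, vscale (1 - / INR k.+2) y i = \big[Rplus/0]_(j <- iota 0 (mc A p x)) (lam k j * nth (vzero d) (Lc A p x) j i).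
  move=> k; exact: (proj2_sig (constructive_indefinite_description _ (conv_weights (hyk k)))).
have hb : forall k j, (j < mc A p x)%N -> Rabs (lam k j) <= 1.
  move=> k j hj; have [h0 [h1 _]] := hlam k; rewrite Rabs_right; last by apply: Rle_ge.
  rewrite -h1; apply: (@sum_le_term _ (iota 0 (mc A p x)) (lam k)); [exact: iota_uniq| by rewrite mem_iota|exact: h0].
have [phi [hphi [l hl]]] := BWm hb.
apply: (@weights_conv d r A p x y l).
- move=> j hj; apply: (cv_ge0 (hl j hj)) => k; exact: (proj1 (hlam _)).
- apply: (UL_sequence (fun k => \big[Rplus/0]_(j <- iota 0 (mc A p x)) lam (phi k) j)).
    by apply: cv_sum_in => j; rewrite mem_iota => /andP [_ hj]; exact: hl.
  apply: (@cv_ext (fun _ => 1)); [by move=> k; rewrite (proj1 (proj2 (hlam _)))| exact: CV_const].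
- move=> i; apply: (UL_sequence (fun k => \big[Rplus/0]_(j <- iota 0 (mc A p x)) (lam (phi k) j * nth (vzero d) (Lc A p x) j i))).
    apply: (@cv_ext (fun k => (1 - / INR (phi k).+2) * y i)).
      by move=> k; rewrite -(proj2 (proj2 (hlam _))).
    rewrite -{2}(Rmult_1_l (y i)); apply: CV_mult; last exact: CV_const.
    rewrite -{2}(Rminus_0_r 1); apply: CV_minus; first exact: CV_const.
    exact: (@cv_sub (fun k => / INR k.+2) 0 phi hphi cv_inv2).
  apply: cv_sum_in => j; rewrite mem_iota => /andP [_ hj]; apply: CV_mult; [exact: hl|exact: CV_const].
Qed.

End Att2.

End Part10.

Section Part11.
Local Open Scope R_scope.

Lemma act_wsum d r (A : 'I_r -> Mat d) w (l : list (R * Vec d)) :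
  act A w (wsum l) = wsum (map (fun cv => (cv.1, act A w cv.2)) l).
Proof. elim: l => [|[c v] l IH] /=; first exact: act_zero. by rewrite act_add act_scale IH. Qed.

Lemma fold_max_ge (l : seq R) a : In a l -> a <= fold_right Rmax 0 l.
Proof. elim: l => //= b l IH [->|h]; first exact: Rmax_l. apply: Rle_trans (IH h) _; exact: Rmax_r. Qed.

Lemma fold_max_lt (l : seq R) M : 0 < M -> (forall a, In a l -> a < M) -> fold_right Rmax 0 l < M.
Proof. elim: l => //= b l IH hM h; apply: Rmax_lub_lt; [by apply: h; left|by apply: IH => // a ha; apply: h; right]. Qed.

Lemma wsum_pt d (N : Vec d -> R) (hN : is_norm N) (l : list (R * Vec d)) :
  (forall cv, In cv l -> 0 <= cv.1) -> fold_right Rplus 0 (map fst l) = 1 ->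
  exists cv, In cv l /\ N (wsum l) <= N cv.2.
Proof.
move=> h0 h1; apply: NNPP => hno.
have hlt : forall cv, In cv l -> N cv.2 < N (wsum l).
  move=> cv hcv; apply: Rnot_le_lt => hle; apply: hno; by exists cv.
have hne : l <> [::] by move=> e; rewrite e in h1; simpl in h1; lra.
have hpos : 0 < N (wsum l).
  case: l hne hlt {h0 h1 hno} => // cv l _ h; have := h cv (or_introl erefl); have := N_ge0 hN cv.2; lra.
set M' := fold_right Rmax 0 (map (fun cv => N cv.2) l).
have hM' : M' < N (wsum l).
  apply: fold_max_lt => // a /in_map_iff [cv [<- hcv]]; exact: hlt.
have h2 : N (wsum l) <= fold_right Rplus 0 (map fst l) * M'.
  apply: N_wsum => // cv hcv; split; first exact: h0.
  apply: fold_max_ge; apply/in_map_iff; by exists cv.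
rewrite h1 Rmult_1_l in h2; lra.
Qed.

End Part11.

Section Part12.
Local Open Scope R_scope.

Lemma eta_facts (mu : R) (n p : nat) : 1 < mu -> (1 <= n)%nat ->
  1 <= Rpower mu (/ INR (n + p)) /\ Rpower mu (/ INR (n + p)) ^ (n + p) = mu.
Proof.
move=> hmu hn; have hI : 0 < INR (n + p) by apply: lt_0_INR; apply/ltP; apply: leq_trans hn (leq_addr _ _).
split.
  have e : 1 = Rpower mu 0 by rewrite Rpower_O; lra.
  rewrite {1}e; apply: Rle_Rpower; first lra.
  apply: Rlt_le; exact: Rinv_0_lt_compat.
rewrite -Rpower_pow; last by rewrite /Rpower; apply: exp_pos.
rewrite Rpower_mult Rinv_l; last lra. apply: Rpower_1; lra.
Qed.

Lemma num_ineq (mu rho : R) (n p q : nat) : 1 < mu -> (1 <= n)%nat -> 0 < rho -> (q <= p)%nat ->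
  (Rpower mu (/ INR (n + p)) * rho) ^ (q + n) <= mu * Rmax 1 (rho ^ p) * rho ^ n.
Proof.
move=> hmu hn hr hq; have [he1 he2] := eta_facts p hmu hn.
set eta := Rpower mu (/ INR (n + p)) in he1 he2 *.
rewrite Rpow_mult_distr (pow_add rho).
have h1 : eta ^ (q + n) <= mu.
  rewrite -he2; apply: Rle_pow => //; apply/leP; rewrite addnC leq_add2l //.
have h2 : rho ^ q <= Rmax 1 (rho ^ p).
  case: (Rle_lt_dec 1 rho) => h.
    apply: Rle_trans (Rmax_r _ _); apply: Rle_pow => //; by apply/leP.
  apply: Rle_trans (Rmax_l _ _); rewrite -(pow1 q); apply: pow_incr; lra.
have h3 : 0 <= rho ^ q by apply: pow_le; lra.
have h4 : 0 <= rho ^ n by apply: pow_le; lra.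
have h5 : 0 <= eta ^ (q + n) by apply: pow_le; lra.
have h6 : eta ^ (q + n) * rho ^ q <= mu * Rmax 1 (rho ^ p) by apply: Rmult_le_compat.
rewrite -Rmult_assoc; apply: Rmult_le_compat_r => //.
Qed.

Section Main.
Variables (d r : nat) (A : 'I_r -> Mat d) (N : Vec d -> R) (p n : nat) (mu : R) (w : list 'I_r) (xs : Vec d).
Hypotheses (hirr : irreducible A) (hN : is_norm N) (hp : (d - 1 <= p)%nat) (hn : (1 <= n)%nat)
  (hmu : 1 < mu) (hw : length w = n) (hxs : xs <> vzero d)
  (hyp : N (act A w xs) >= mu * eta_p N A p * jsr N A ^ n * N xs).

Lemma chi_facts : 0 < chi N A p /\ forall x, N x = 1 -> chi N A p <= Rsup (Tx A N p x).
Proof.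
have hnx := N_neq0 hN hxs.
set e0 := vscale (/ N xs) xs.
have he0 : N e0 = 1.
  rewrite /e0 N_scale // Rabs_right; [field; lra| apply: Rle_ge; apply: Rlt_le; exact: Rinv_0_lt_compat].
have [delta [hd hdel]] := Tx_lower hN hirr hp he0.
have -> : chi N A p = Rinf (fun z => exists x, N x = 1 /\ z = Rsup (Tx A N p x)) by [].
split.
  apply: Rlt_le_trans hd _; apply: Rinf_ge; first by exists (Rsup (Tx A N p e0)), e0.
  by move=> z [x [hx ->]]; apply: hdel.
move=> x hx; apply: Rinf_le; last by exists x.
by exists delta => z [x' [hx' ->]]; apply: hdel.
Qed.

Hypothesis hrho : 0 < jsr N A.

Lemma step x : x <> vzero d -> exists F : list 'I_r, (1 <= length F)%nat /\
  (Rpower mu (/ INR (n + p)) * jsr N A) ^ length F * N x <= N (act A F x).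
Proof.
move=> hx; have [hc hcx] := chi_facts.
have hr := hrho; have hy := hyp.
set c := chi N A p in hc hcx hy *; set rho := jsr N A in hr hy *.
have hnx := N_neq0 hN hx; have hnxs := N_neq0 hN hxs.
set xh := vscale (/ N x) x.
have hxh : N xh = 1.
  rewrite /xh N_scale // Rabs_right; [field; lra| apply: Rle_ge; apply: Rlt_le; exact: Rinv_0_lt_compat].
have hlub := @Tx_lub d r A N p hN xh xh hxh.
have hcs := hcx xh hxh.
set y := vscale (c / N xs) xs.
have hcn : 0 < c / N xs by apply: Rdiv_lt_0_compat; lra.
have hNy : N y = c.
  rewrite /y N_scale // Rabs_right; first by field; lra.
  by apply: Rle_ge; apply: Rlt_le.
have [l [hl0 [hl1 hly]]] := attain hN hlub (Rlt_le_trans _ _ _ hc hcs) (Rle_trans _ _ _ (Req_le _ _ hNy) hcs).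
set l' := map (fun cv => (cv.1, act A w cv.2)) l.
have [cv' [hcv' hle]] : exists cv, In cv l' /\ N (wsum l') <= N cv.2.
  apply: wsum_pt => //.
    by move=> cv /in_map_iff [cv0 [<- h]] /=; exact: (proj1 (hl0 _ h)).
  by rewrite /l' -map_comp.
move: hcv' => /in_map_iff [cv [ecv hcv]].
have [_ hS] := hl0 cv hcv.
have key : mu * Rmax 1 (rho ^ p) * rho ^ n <= N (act A w y).
  rewrite /y act_scale N_scale // Rabs_right; last by apply: Rle_ge; apply: Rlt_le.
  have := Rmult_le_compat_l _ _ _ (Rlt_le _ _ hcn) (Rge_le _ _ hy).
  have -> : c / N xs * (mu * eta_p N A p * rho ^ n * N xs) = mu * Rmax 1 (rho ^ p) * rho ^ n.
    by rewrite /eta_p -/c -/rho; field; lra.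
  done.
have hwl : N (act A w y) <= N (act A w cv.2).
  by rewrite hly act_wsum -/l'; apply: Rle_trans hle _; rewrite -ecv /=; lra.
have [q [hq hF]] : exists q : list 'I_r, (length q <= p)%nat /\ N (act A w cv.2) = N (act A (q ++ w) xh).
  case: hS => [[q [hq ->]]|[q [hq ->]]]; exists q; split => //; rewrite act_cat //.
  by rewrite !act_opp N_opp.
exists (q ++ w); split.
  by rewrite length_size size_cat -!length_size hw; apply: leq_trans hn (leq_addl _ _).
have hxe : x = vscale (N x) xh.
  by apply: vext => i; rewrite /xh /vscale; field; lra.
rewrite {2}hxe act_scale N_scale // Rabs_right; last lra.
have hlen : length (q ++ w) = (length q + n)%nat by rewrite !length_size size_cat -!length_size hw.
rewrite hlen Rmult_comm; apply: Rmult_le_compat_l; first lra.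
rewrite -hF; apply: Rle_trans hwl; apply: Rle_trans key.
apply: num_ineq => //.
Qed.

End Main.

End Part12.

Open Scope R_scope.

Theorem lemma4 (d r : nat) (A : 'I_r -> Mat d) (N : Vec d -> R)
  (p n : nat) (mu : R) (w : list 'I_r) (xs : Vec d) :
  irreducible A -> is_norm N ->
  (d - 1 <= p)%nat -> (1 <= n)%nat -> 1 < mu ->
  length w = n -> xs <> vzero d ->
  N (act A w xs) >= mu * eta_p N A p * jsr N A ^ n * N xs ->
  let eta := Rpower mu (/ INR (n + p)) in
  exists H : nat -> list 'I_r,
    (forall k, (1 <= length (H k))%nat) /\
    (forall M : nat, exists K : nat, forall k, (K <= k)%nat -> (M <= length (H k))%nat) /\
    (forall k, opnorm N (act A (H k)) >= (eta * jsr N A) ^ length (H k)).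
Proof.
move=> hirr hN hp hn hmu hw hxs hyp eta.
have heta : 0 < eta by rewrite /eta /Rpower; apply: exp_pos.
have hnxs := N_neq0 hN hxs.
case: (Rle_lt_dec (jsr N A) 0) => hrho.
  case: w hw hyp => [|i0 w'] hw hyp; first by move: hn; rewrite -hw.
  exists (fun k => nseq (k + k).+1 i0); split; [|split].
  - by move=> k; rewrite length_size size_nseq.
  - move=> M; exists M => k hk; rewrite length_size size_nseq; apply: leq_trans hk _.
    by apply: leq_trans (leq_addr k k) _.
  - move=> k; rewrite length_size size_nseq; apply: Rle_ge.
    apply: Rle_trans (opnorm_ge0 A hN _ hxs).
    set a := eta * jsr N A.
    have ha : a <= 0 by rewrite /a; nra.
    rewrite /= pow_add; have := Rmult_le_pos (a ^ k) (a ^ k).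
    have : 0 <= a ^ k * a ^ k by nra.
    nra.
have hstep := step hirr hN hp hn hmu hw hxs hyp hrho.
pose sf := fun x => match excluded_middle_informative (x <> vzero d) with
  | left h => proj1_sig (constructive_indefinite_description _ (hstep x h)) | right _ => [::] end.
have hsf : forall x, x <> vzero d -> (1 <= length (sf x))%nat /\
   (eta * jsr N A) ^ length (sf x) * N x <= N (act A (sf x) x).
  move=> x hx; rewrite /sf; case: excluded_middle_informative => // h.
  exact: (proj2_sig (constructive_indefinite_description _ (hstep x h))).
pose fix H k := match k with 0 => sf xs | k'.+1 => H k' ++ sf (act A (H k') xs) end.
have hH : forall k, act A (H k) xs <> vzero d /\
    (eta * jsr N A) ^ length (H k) * N xs <= N (act A (H k) xs) /\ (k < length (H k))%nat.
  have hpos : 0 < eta * jsr N A by apply: Rmult_lt_0_compat.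
  elim=> [|k [IH1 [IH2 IH3]]] /=.
    have [h1 h2] := hsf xs hxs; split; last by split.
    move=> e; have := pow_lt _ (length (sf xs)) hpos; rewrite e N_zero // in h2; nra.
  have [h1 h2] := hsf _ IH1.
  have hlen : length (H k ++ sf (act A (H k) xs)) = (length (H k) + length (sf (act A (H k) xs)))%nat.
    by rewrite !length_size size_cat.
  have key : (eta * jsr N A) ^ length (H k ++ sf (act A (H k) xs)) * N xs <=
             N (act A (H k ++ sf (act A (H k) xs)) xs).
    rewrite hlen pow_add act_cat.
    apply: Rle_trans h2.
    set a := (eta * jsr N A) ^ length (H k); set b := (eta * jsr N A) ^ length (sf (act A (H k) xs)).
    have hb : 0 <= b by apply: pow_le; lra.
    have := Rmult_le_compat_l _ _ _ hb IH2.
    have -> : a * b * N xs = b * (a * N xs) by ring.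
    done.
  split; last split => //.
    move=> e; rewrite e N_zero // in key.
    have := pow_lt _ (length (H k ++ sf (act A (H k) xs))) hpos; nra.
  by rewrite hlen; have := leq_add IH3 h1; rewrite addn1.
exists H; split; [|split].
- move=> k; have [_ [_ h]] := hH k; exact: leq_trans h.
- move=> M; exists M => k hk; have [_ [_ h]] := hH k; apply: leq_trans hk (ltnW h).
- move=> k; have [_ [h _]] := hH k; apply: Rle_ge; apply: Rle_trans (opnorm_ge A hN _ hxs).
  apply: (Rmult_le_reg_r (N xs)) => //; rewrite /Rdiv Rmult_assoc Rinv_l; lra.
Qed.
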